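(* Let $\mathcal{C}$ be a fibration category and $f\colon A\to B$ an acyclic fibration. Then the pullback functor $f^*\colon(\mathcal{C}\twoheadrightarrow B)\to(\mathcal{C}\twoheadrightarrow A)$ is a weak equivalence of fibration categories.
   Context: A fibration category is a category with wide subcategories of fibrations and weak equivalences such that: weak equivalences satisfy 2-out-of-6; isomorphisms are acyclic fibrations (maps that are both fibrations and weak equivalences); pullbacks along fibrations exist and fibrations and acyclic fibrations are stable under pullback; there is a terminal object and all objects are fibrant; every map factors as a weak equivalence followed by a fibration. For an object $A$, $\mathcal{C}\twoheadrightarrow A$ is the full subcategory of the slice $\mathcal{C}/A$ on fibrations $X\to A$, with fibrations and weak equivalences created by the forgetful functor to $\mathcal{C}$; it is a fibration category. An exact functor preserves fibrations, acyclic fibrations, pullbacks along fibrations and the terminal object; an exact functor is a weak equivalence of fibration categories if it induces an equivalence of homotopy categories (localizations at the weak equivalences). *)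

(* Defs.v *)
From Stdlib Require Import ProofIrrelevance.

Record Category := {
  Ob : Type;
  Hom : Ob -> Ob -> Type;
  idm : forall x, Hom x x;
  comp : forall x y z, Hom y z -> Hom x y -> Hom x z;
  comp_idl : forall x y (f : Hom x y), comp x y y (idm y) f = f;
  comp_idr : forall x y (f : Hom x y), comp x x y f (idm x) = f;
  comp_assoc : forall w x y z (f : Hom w x) (g : Hom x y) (h : Hom y z),
      comp w y z h (comp w x y g f) = comp w x z (comp x y z h g) f }.

Arguments Hom {c} _ _.
Arguments idm {c} x.
Arguments comp {c x y z} _ _.

Record Functor (C D : Category) := {
  fob : Ob C -> Ob D;
  fmor : forall x y, @Hom C x y -> @Hom D (fob x) (fob y);
  fmor_id : forall x, fmor x x (idm x) = idm (fob x);
  fmor_comp : forall x y z (f : @Hom C x y) (g : @Hom C y z),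
      fmor x z (comp g f) = comp (fmor y z g) (fmor x y f) }.

Arguments fob {C D} _ _.
Arguments fmor {C D} _ {x y} _.

(** Pullback squares:    P --g--> X
                         |        |
                        p'        p
                         v        v
                         A --f--> B                                        *)
Definition IsPullback {C : Category} {X A B P : Ob C}
  (p : Hom X B) (f : Hom A B) (p' : Hom P A) (g : Hom P X) : Prop :=
  comp p g = comp f p' /\
  forall (Q : Ob C) (a : Hom Q A) (x : Hom Q X), comp p x = comp f a ->
    exists u : Hom Q P, (comp p' u = a /\ comp g u = x) /\
      forall v : Hom Q P, comp p' v = a -> comp g v = x -> v = u.

Definition IsTerminal {C : Category} (t : Ob C) : Prop :=
  forall X : Ob C, exists u : Hom X t, forall v : Hom X t, v = u.

Record FCat := {
  fcat :> Category;
  fib : forall x y : Ob fcat, Hom x y -> Prop;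
  weq : forall x y : Ob fcat, Hom x y -> Prop }.

Arguments fib {f x y} _.
Arguments weq {f x y} _.

Record IsFibrationCategory (C : FCat) : Prop := {
  fc_fib_id : forall x : Ob C, fib (idm x);
  fc_weq_id : forall x : Ob C, weq (idm x);
  fc_fib_comp : forall (x y z : Ob C) (f : Hom x y) (g : Hom y z),
      fib f -> fib g -> fib (comp g f);
  fc_weq_comp : forall (x y z : Ob C) (f : Hom x y) (g : Hom y z),
      weq f -> weq g -> weq (comp g f);
  fc_2of6 : forall (w x y z : Ob C) (f : Hom w x) (g : Hom x y) (h : Hom y z),
      weq (comp g f) -> weq (comp h g) ->
      weq f /\ weq g /\ weq h /\ weq (comp h (comp g f));
  fc_iso : forall (x y : Ob C) (f : Hom x y) (g : Hom y x),
      comp g f = idm x -> comp f g = idm y -> fib f /\ weq f;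
  fc_pb_exists : forall (X A B : Ob C) (p : Hom X B) (f : Hom A B), fib p ->
      exists (P : Ob C) (p' : Hom P A) (g : Hom P X), IsPullback p f p' g;
  fc_pb_fib : forall (X A B P : Ob C) (p : Hom X B) (f : Hom A B)
      (p' : Hom P A) (g : Hom P X), fib p -> IsPullback p f p' g -> fib p';
  fc_pb_afib : forall (X A B P : Ob C) (p : Hom X B) (f : Hom A B)
      (p' : Hom P A) (g : Hom P X), fib p -> weq p -> IsPullback p f p' g -> weq p';
  fc_terminal : exists t : Ob C, IsTerminal t;
  fc_fibrant : forall (X t : Ob C), IsTerminal t -> forall u : Hom X t, fib u;
  fc_factor : forall (x y : Ob C) (f : Hom x y),
      exists (z : Ob C) (w : Hom x z) (p : Hom z y), weq w /\ fib p /\ f = comp p w }.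

Section Slice.
Variables (C : FCat) (A : Ob C).

Definition slice_ob := {X : Ob C & {p : Hom X A | fib p}}.
Definition sl_obj (X : slice_ob) : Ob C := projT1 X.
Definition sl_map (X : slice_ob) : Hom (sl_obj X) A := proj1_sig (projT2 X).

Definition slice_hom (X Y : slice_ob) :=
  {h : Hom (sl_obj X) (sl_obj Y) | comp (sl_map Y) h = sl_map X}.

Lemma sig_eq_pi {T : Type} {P : T -> Prop} (a b : sig P) :
  proj1_sig a = proj1_sig b -> a = b.
Proof.
  destruct a as [a Ha], b as [b Hb]; simpl; intros ->.
  f_equal; apply proof_irrelevance.
Qed.

Definition slice_id (X : slice_ob) : slice_hom X X :=
  exist _ (idm (sl_obj X)) (comp_idr _ _ _ (sl_map X)).

Definition slice_comp (X Y Z : slice_ob) (h : slice_hom Y Z) (g : slice_hom X Y)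
  : slice_hom X Z.
Proof.
  exists (comp (proj1_sig h) (proj1_sig g)).
  rewrite comp_assoc, (proj2_sig h); exact (proj2_sig g).
Defined.

Arguments slice_comp {X Y Z} _ _.

Lemma slice_idl X Y (f : slice_hom X Y) : slice_comp (slice_id Y) f = f.
Proof. apply sig_eq_pi; simpl; apply comp_idl. Qed.
Lemma slice_idr X Y (f : slice_hom X Y) : slice_comp f (slice_id X) = f.
Proof. apply sig_eq_pi; simpl; apply comp_idr. Qed.
Lemma slice_assoc W X Y Z (f : slice_hom W X) (g : slice_hom X Y) (h : slice_hom Y Z) :
  slice_comp h (slice_comp g f) = slice_comp (slice_comp h g) f.
Proof. apply sig_eq_pi; simpl; apply comp_assoc. Qed.

Definition slice_cat : Category :=
  {| Ob := slice_ob; Hom := slice_hom; idm := slice_id; comp := @slice_comp;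
     comp_idl := slice_idl; comp_idr := slice_idr; comp_assoc := slice_assoc |}.

Definition slice : FCat :=
  {| fcat := slice_cat;
     fib := fun X Y (h : slice_hom X Y) => fib (proj1_sig h);
     weq := fun X Y (h : slice_hom X Y) => weq (proj1_sig h) |}.

End Slice.

(** Morphisms x -> y are zigzags (finite composable strings of morphisms of C
    and formal inverses of weak equivalences), modulo the smallest congruence
    identifying composites/identities of C and making the formal inverses
    two-sided inverses. *)

Inductive zigzag (C : FCat) : Ob C -> Ob C -> Type :=
| zz_nil : forall x, zigzag C x x
| zz_fwd : forall x y z, Hom x y -> zigzag C y z -> zigzag C x z
| zz_bwd : forall x y z (w : Hom y x), weq w -> zigzag C y z -> zigzag C x z.

Arguments zz_nil {C} x.
Arguments zz_fwd {C x y z} _ _.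
Arguments zz_bwd {C x y z} _ _ _.

Fixpoint zz_app {C : FCat} {x y z : Ob C} (p : zigzag C x y) : zigzag C y z -> zigzag C x z :=
  match p in zigzag _ x y return zigzag C y z -> zigzag C x z with
  | zz_nil _ => fun q => q
  | zz_fwd f p' => fun q => zz_fwd f (zz_app p' q)
  | zz_bwd w Hw p' => fun q => zz_bwd w Hw (zz_app p' q)
  end.

Inductive zz_rel (C : FCat) : forall x y : Ob C, zigzag C x y -> zigzag C x y -> Prop :=
| zr_refl : forall x y (p : zigzag C x y), zz_rel C x y p p
| zr_sym : forall x y (p q : zigzag C x y), zz_rel C x y p q -> zz_rel C x y q p
| zr_trans : forall x y (p q r : zigzag C x y),
    zz_rel C x y p q -> zz_rel C x y q r -> zz_rel C x y p r
| zr_cong : forall x y z (p p' : zigzag C x y) (q q' : zigzag C y z),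
    zz_rel C x y p p' -> zz_rel C y z q q' -> zz_rel C x z (zz_app p q) (zz_app p' q')
| zr_id : forall x, zz_rel C x x (zz_fwd (idm x) (zz_nil x)) (zz_nil x)
| zr_comp : forall x y z (f : Hom x y) (g : Hom y z),
    zz_rel C x z (zz_fwd f (zz_fwd g (zz_nil z))) (zz_fwd (comp g f) (zz_nil z))
| zr_inv_l : forall x y (w : Hom y x) (Hw : weq w),
    zz_rel C x x (zz_bwd w Hw (zz_fwd w (zz_nil x))) (zz_nil x)
| zr_inv_r : forall x y (w : Hom y x) (Hw : weq w),
    zz_rel C y y (zz_fwd w (zz_bwd w Hw (zz_nil y))) (zz_nil y).

Arguments zz_rel {C x y} _ _.

(** F induces an equivalence of homotopy categories: there is a functor
    G : Ho(C) -> Ho(D) with G o gamma_C = gamma_D o F, and G is an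
    equivalence (fully faithful and essentially surjective). *)
Definition HoEquivalence {C D : FCat} (F : Functor C D) : Prop :=
  exists G : forall x y : Ob C, zigzag C x y -> zigzag D (fob F x) (fob F y),
    (forall x y (p q : zigzag C x y), zz_rel p q -> zz_rel (G x y p) (G x y q)) /\
    (forall x, zz_rel (G x x (zz_nil x)) (zz_nil (fob F x))) /\
    (forall x y z (p : zigzag C x y) (q : zigzag C y z),
        zz_rel (G x z (zz_app p q)) (zz_app (G x y p) (G y z q))) /\
    (forall x y (f : Hom x y),
        zz_rel (G x y (zz_fwd f (zz_nil y))) (zz_fwd (fmor F f) (zz_nil (fob F y)))) /\
    (forall x y (q : zigzag D (fob F x) (fob F y)), exists p, zz_rel (G x y p) q) /\
    (forall x y (p p' : zigzag C x y), zz_rel (G x y p) (G x y p') -> zz_rel p p') /\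
    (forall d : Ob D, exists (c : Ob C) (u : zigzag D (fob F c) d) (v : zigzag D d (fob F c)),
        zz_rel (zz_app u v) (zz_nil (fob F c)) /\ zz_rel (zz_app v u) (zz_nil d)).

Definition IsExact {C D : FCat} (F : Functor C D) : Prop :=
  (forall (x y : Ob C) (f : Hom x y), fib f -> fib (fmor F f)) /\
  (forall (x y : Ob C) (f : Hom x y), fib f -> weq f -> fib (fmor F f) /\ weq (fmor F f)) /\
  (forall (X A B P : Ob C) (p : Hom X B) (f : Hom A B) (p' : Hom P A) (g : Hom P X),
      fib p -> IsPullback p f p' g ->
      IsPullback (fmor F p) (fmor F f) (fmor F p') (fmor F g)) /\
  (forall t : Ob C, IsTerminal t -> IsTerminal (fob F t)).

Definition IsWeakEquivalenceFC {C D : FCat} (F : Functor C D) : Prop :=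
  IsExact F /\ HoEquivalence F.

(** Fs is a pullback functor f^* : (C ->> B) -> (C ->> A): it sends each
    fibration p : X ->> B to (the projection of) a chosen pullback of p along f,
    and each morphism over B to the induced morphism between pullbacks. *)
Definition IsPullbackFunctor {C : FCat} {A B : Ob C} (f : Hom A B)
  (Fs : Functor (slice C B) (slice C A)) : Prop :=
  exists gs : forall X : slice_ob C B, Hom (sl_obj C A (fob Fs X)) (sl_obj C B X),
    (forall X : slice_ob C B,
        IsPullback (sl_map C B X) f (sl_map C A (fob Fs X)) (gs X)) /\
    (forall (X Y : slice_ob C B) (h : slice_hom C B X Y),
        comp (gs Y) (proj1_sig (@fmor _ _ Fs X Y h)) = comp (proj1_sig h) (gs X)).

(* Main.v *)
Require Import Defs.
From Stdlib Require Import Setoid Morphisms ProofIrrelevance ClassicalEpsilon.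

Instance zz_rel_equiv (C : FCat) (x y : Ob C) : Equivalence (@zz_rel C x y).
Proof. split; intro; intros; eauto using zr_refl, zr_sym, zr_trans. Qed.

Instance zz_app_proper (C : FCat) (x y z : Ob C) :
  Proper (zz_rel ==> zz_rel ==> zz_rel) (@zz_app C x y z).
Proof. intros p p' Hp q q' Hq. apply zr_cong; auto. Qed.

Lemma app_nil_r {C : FCat} {x y : Ob C} (p : zigzag C x y) : zz_app p (zz_nil y) = p.
Proof. induction p; simpl; try rewrite IHp; reflexivity. Qed.

Lemma app_assoc' {C : FCat} {x y z w : Ob C} (p : zigzag C x y) (q : zigzag C y z)
  (r : zigzag C z w) : zz_app p (zz_app q r) = zz_app (zz_app p q) r.
Proof. induction p; simpl; try rewrite IHp; reflexivity. Qed.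

Definition s1 {C : FCat} {x y : Ob C} (f : Hom x y) : zigzag C x y := zz_fwd f (zz_nil y).
Definition inv {C : FCat} {x y : Ob C} (w : Hom y x) (H : weq w) : zigzag C x y :=
  zz_bwd w H (zz_nil y).

Lemma fwd_app {C : FCat} {x y z : Ob C} (f : Hom x y) (p : zigzag C y z) :
  zz_fwd f p = zz_app (s1 f) p.
Proof. reflexivity. Qed.
Lemma bwd_app {C : FCat} {x y z : Ob C} (w : Hom y x) (H : weq w) (p : zigzag C y z) :
  zz_bwd w H p = zz_app (inv w H) p.
Proof. reflexivity. Qed.

Lemma s1_comp {C : FCat} {x y z : Ob C} (f : Hom x y) (g : Hom y z) :
  zz_rel (zz_app (s1 f) (s1 g)) (s1 (comp g f)).
Proof. apply zr_comp. Qed.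
Lemma s1_id {C : FCat} (x : Ob C) : zz_rel (s1 (idm x)) (zz_nil x).
Proof. apply zr_id. Qed.
Lemma s1_inv {C : FCat} {x y : Ob C} (w : Hom y x) (H : weq w) :
  zz_rel (zz_app (s1 w) (inv w H)) (zz_nil y).
Proof. apply zr_inv_r. Qed.
Lemma inv_s1 {C : FCat} {x y : Ob C} (w : Hom y x) (H : weq w) :
  zz_rel (zz_app (inv w H) (s1 w)) (zz_nil x).
Proof. apply zr_inv_l. Qed.

Lemma cancel_l {C : FCat} {x y z : Ob C} (w : Hom y x) (H : weq w) (p q : zigzag C x z) :
  zz_rel (zz_app (s1 w) p) (zz_app (s1 w) q) -> zz_rel p q.
Proof.
  intro E. assert (E' := zr_cong _ _ _ _ _ _ _ _ (zr_refl _ _ _ (inv w H)) E).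
  rewrite !app_assoc', !inv_s1 in E'. exact E'.
Qed.

Lemma swap_sq {C : FCat} {x' y' x y : Ob C} (a : Hom y' x') Ha (b : Hom y x) Hb
  (c : Hom x' x) (d : Hom y' y) : comp c a = comp b d ->
  zz_rel (zz_app (s1 c) (inv b Hb)) (zz_app (inv a Ha) (s1 d)).
Proof.
  intro E.
  transitivity (zz_app (zz_app (inv a Ha) (s1 a)) (zz_app (s1 c) (inv b Hb))).
  { rewrite inv_s1. reflexivity. }
  rewrite <- app_assoc'. rewrite (app_assoc' (s1 a)), s1_comp, E, <- s1_comp.
  rewrite <- app_assoc', s1_inv, app_nil_r. reflexivity.
Qed.

Definition WP {C D : FCat} (F : Functor C D) : Prop :=
  forall x y (w : Hom x y), weq w -> weq (fmor F w).

Fixpoint zmap {C D : FCat} (F : Functor C D) (HF : WP F) {x y : Ob C} (p : zigzag C x y)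
  : zigzag D (fob F x) (fob F y) :=
  match p in zigzag _ x y return zigzag D (fob F x) (fob F y) with
  | zz_nil x => zz_nil (fob F x)
  | zz_fwd f p' => zz_fwd (fmor F f) (zmap F HF p')
  | zz_bwd w Hw p' => zz_bwd (fmor F w) (HF _ _ w Hw) (zmap F HF p')
  end.

Lemma zmap_app {C D : FCat} (F : Functor C D) HF {x y z : Ob C} (p : zigzag C x y)
  (q : zigzag C y z) : zmap F HF (zz_app p q) = zz_app (zmap F HF p) (zmap F HF q).
Proof. induction p; simpl; try rewrite IHp; reflexivity. Qed.

Lemma zmap_rel {C D : FCat} (F : Functor C D) HF {x y : Ob C} (p q : zigzag C x y) :
  zz_rel p q -> zz_rel (zmap F HF p) (zmap F HF q).
Proof.
  induction 1; simpl.
  - reflexivity.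
  - symmetry; auto.
  - etransitivity; eauto.
  - rewrite !zmap_app. apply zr_cong; auto.
  - rewrite fmor_id. apply zr_id.
  - rewrite fmor_comp. apply zr_comp.
  - apply zr_inv_l.
  - apply zr_inv_r.
Qed.

Definition Fcomp {C D E : FCat} (G : Functor D E) (F : Functor C D) : Functor C E.
Proof.
  refine {| fob := fun x => fob G (fob F x); fmor := fun x y h => fmor G (fmor F h) |}.
  - intro x. rewrite !fmor_id. reflexivity.
  - intros. rewrite !fmor_comp. reflexivity.
Defined.

Definition Fid (C : FCat) : Functor C C.
Proof.
  refine {| fob := fun x => x; fmor := fun x y h => h |}; reflexivity.
Defined.

Lemma WP_comp {C D E : FCat} (G : Functor D E) (F : Functor C D) :
  WP G -> WP F -> WP (Fcomp G F).
Proof. intros HG HF x y w H. apply HG, HF, H. Defined.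
Lemma WP_id (C : FCat) : WP (Fid C).
Proof. intros x y w H. exact H. Defined.

Lemma zmap_id {C : FCat} {x y : Ob C} (p : zigzag C x y) : zmap (Fid C) (WP_id C) p = p.
Proof. induction p; simpl; try rewrite IHp; reflexivity. Qed.

Lemma zmap_comp {C D E : FCat} (G : Functor D E) (F : Functor C D) HG HF {x y : Ob C}
  (p : zigzag C x y) :
  zmap (Fcomp G F) (WP_comp G F HG HF) p = zmap G HG (zmap F HF p).
Proof. induction p; simpl; try rewrite IHp; reflexivity. Qed.

Lemma zmap_nat {C D : FCat} (P Q : Functor C D) HP HQ
  (e : forall x, Hom (fob P x) (fob Q x))
  (He : forall x y (h : Hom x y), comp (e y) (fmor P h) = comp (fmor Q h) (e x))
  {x y : Ob C} (p : zigzag C x y) :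
  zz_rel (zz_app (s1 (e x)) (zmap Q HQ p)) (zz_app (zmap P HP p) (s1 (e y))).
Proof.
  induction p as [x|x y z h p IH|x y z w Hw p IH]; cbn [zmap].
  - reflexivity.
  - rewrite fwd_app, app_assoc', s1_comp, <- He, <- s1_comp, <- app_assoc', IH.
    rewrite app_assoc'. reflexivity.
  - rewrite bwd_app, app_assoc'.
    rewrite (swap_sq (fmor P w) (HP _ _ w Hw) (fmor Q w) (HQ _ _ w Hw) (e x) (e y)).
    2: { apply He. }
    rewrite <- app_assoc', IH, app_assoc'. reflexivity.
Qed.

Lemma inv_pair {C : FCat} {x y : Ob C} (a : Hom x y) (b : Hom y x) Ha Hb :
  zz_rel (zz_app (s1 a) (s1 b)) (zz_nil x) ->
  zz_rel (zz_app (inv b Hb) (inv a Ha)) (zz_nil x).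
Proof.
  intro E.
  transitivity (zz_app (zz_app (s1 a) (s1 b)) (zz_app (inv b Hb) (inv a Ha))).
  { rewrite E. reflexivity. }
  rewrite <- !app_assoc'. rewrite (app_assoc' (s1 b)), s1_inv. apply s1_inv.
Qed.

Lemma ho_equiv {C D : FCat} (F : Functor C D) (L : Functor D C) (HF : WP F) (HL : WP L)
  (eps : forall x, Hom (fob L (fob F x)) x)
  (Heps : forall x y (h : Hom x y), comp (eps y) (fmor L (fmor F h)) = comp h (eps x))
  (Weps : forall x, weq (eps x))
  (eta : forall d, Hom d (fob F (fob L d)))
  (Heta : forall x y (h : Hom x y), comp (eta y) h = comp (fmor F (fmor L h)) (eta x))
  (Weta : forall d, weq (eta d))
  (tri : forall x, comp (fmor F (eps x)) (eta (fob F x)) = idm (fob F x)) :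
  HoEquivalence F.
Proof.
  assert (NE : forall x y (p : zigzag C x y),
    zz_rel (zz_app (s1 (eps x)) p) (zz_app (zmap L HL (zmap F HF p)) (s1 (eps y)))).
  { intros x y p. rewrite <- (zmap_id p) at 1. rewrite <- (zmap_comp L F HL HF).
    apply (zmap_nat (Fcomp L F) (Fid C) _ _ eps Heps). }
  assert (NH : forall x y (q : zigzag D x y),
    zz_rel (zz_app (s1 (eta x)) (zmap F HF (zmap L HL q))) (zz_app q (s1 (eta y)))).
  { intros x y q. rewrite <- (zmap_comp F L HF HL). rewrite <- (zmap_id q) at 2.
    apply (zmap_nat (Fid D) (Fcomp F L) _ _ eta Heta). }
  exists (fun x y p => zmap F HF p).
  split; [|split; [|split; [|split; [|split; [|split]]]]].
  - intros; apply zmap_rel; auto.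
  - intros; reflexivity.
  - intros; rewrite zmap_app; reflexivity.
  - intros; reflexivity.
  - intros x y q.
    exists (zz_app (inv (eps x) (Weps x)) (zz_app (zmap L HL q) (s1 (eps y)))).
    rewrite !zmap_app.
    change (zmap F HF (inv (eps x) (Weps x))) with
      (inv (fmor F (eps x)) (HF _ _ _ (Weps x))).
    change (zmap F HF (s1 (eps y))) with (s1 (fmor F (eps y))).
    assert (E : zz_rel (zmap F HF (zmap L HL q))
       (zz_app (inv (eta (fob F x)) (Weta _)) (zz_app q (s1 (eta (fob F y)))))).
    { rewrite <- NH, app_assoc', inv_s1. reflexivity. }
    rewrite E. rewrite <- !app_assoc'. rewrite s1_comp, tri, s1_id, app_nil_r.
    rewrite app_assoc', inv_pair. reflexivity.
    rewrite s1_comp, tri. apply s1_id.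
  - intros x y p p' E.
    apply (cancel_l (eps x) (Weps x)).
    rewrite !NE. apply zz_app_proper; [apply zmap_rel; exact E | reflexivity].
  - intro d. exists (fob L d), (inv (eta d) (Weta d)), (s1 (eta d)). split.
    + apply inv_s1.
    + apply s1_inv.
Qed.

Lemma pb_sym {C : Category} {X A B P : Ob C} (p : Hom X B) (f : Hom A B) (p' : Hom P A)
  (g : Hom P X) : IsPullback p f p' g -> IsPullback f p g p'.
Proof.
  intros [E U]. split; [symmetry; exact E|].
  intros Q a x Ex. destruct (U Q x a (eq_sym Ex)) as [u [[H1 H2] H3]].
  exists u. split; [split; assumption|]. intros v V1 V2. apply H3; assumption.
Qed.

Lemma pb_uniq {C : Category} {X A B P : Ob C} (p : Hom X B) (f : Hom A B) (p' : Hom P A)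
  (g : Hom P X) : IsPullback p f p' g ->
  forall Q (u v : Hom Q P), comp p' u = comp p' v -> comp g u = comp g v -> u = v.
Proof.
  intros [E U] Q u v E1 E2.
  destruct (U Q (comp p' v) (comp g v)) as [w [_ Hw]].
  { rewrite !comp_assoc, E. reflexivity. }
  rewrite (Hw u E1 E2). symmetry. apply Hw; reflexivity.
Qed.

Lemma weq_cancel (C : FCat) (HC : IsFibrationCategory C) {x y z : Ob C}
  (u : Hom x y) (g : Hom y z) : weq g -> weq (comp g u) -> weq u.
Proof.
  intros Hg Hgu. destruct (fc_2of6 C HC x y z z u g (idm z) Hgu) as [H _].
  - rewrite comp_idl. exact Hg.
  - exact H.
Qed.

Definition Lob (C : FCat) (HC : IsFibrationCategory C) {A B : Ob C} (f : Hom A B)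
  (Hf : fib f) (X : slice_ob C A) : slice_ob C B :=
  existT _ (sl_obj C A X)
    (exist _ (comp f (sl_map C A X))
       (fc_fib_comp C HC _ _ _ (sl_map C A X) f (proj2_sig (projT2 X)) Hf)).

Definition Lmor (C : FCat) (HC : IsFibrationCategory C) {A B : Ob C} (f : Hom A B)
  (Hf : fib f) (X Y : slice_ob C A) (h : slice_hom C A X Y) :
  slice_hom C B (Lob C HC f Hf X) (Lob C HC f Hf Y).
Proof.
  exists (proj1_sig h). change (comp (comp f (sl_map C A Y)) (proj1_sig h) = comp f (sl_map C A X)).
  rewrite <- comp_assoc, (proj2_sig h). reflexivity.
Defined.

Definition LF (C : FCat) (HC : IsFibrationCategory C) {A B : Ob C} (f : Hom A B)
  (Hf : fib f) : Functor (slice C A) (slice C B).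
Proof.
  refine (Build_Functor (slice C A) (slice C B) (Lob C HC f Hf) (Lmor C HC f Hf) _ _).
  - intro x. apply sig_eq_pi. reflexivity.
  - intros. apply sig_eq_pi. reflexivity.
Defined.

Lemma WP_L (C : FCat) (HC : IsFibrationCategory C) {A B : Ob C} (f : Hom A B)
  (Hf : fib f) : WP (LF C HC f Hf).
Proof. intros x y w H. exact H. Qed.

Lemma ho_part :
  forall (C : FCat), IsFibrationCategory C ->
  forall (A B : Ob C) (f : Hom A B), fib f -> weq f ->
  forall Fs : Functor (slice C B) (slice C A),
    IsPullbackFunctor f Fs -> HoEquivalence Fs.
Proof.
  intros C HC A B f Hf Wf Fs [gs [Hpb Hnat]].
  assert (Wgs : forall X, weq (gs X)).
  { intro X. exact (fc_pb_afib C HC _ _ _ _ f (sl_map C B X) (gs X) _ Hf Wf (pb_sym _ _ _ _ (Hpb X))). }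
  assert (HF : WP Fs).
  { intros X Y w Hw. change (weq (proj1_sig (fmor Fs w))).
    apply (weq_cancel C HC _ (gs Y)). apply Wgs.
    rewrite Hnat. apply (fc_weq_comp C HC); [apply Wgs | exact Hw]. }
  set (L := LF C HC f Hf).
  assert (etaE : forall d : slice_ob C A,
    {u : Hom (sl_obj C A d) (sl_obj C A (fob Fs (fob L d))) |
      comp (sl_map C A (fob Fs (fob L d))) u = sl_map C A d /\
      comp (gs (fob L d)) u = idm _}).
  { intro d. apply constructive_indefinite_description.
    destruct (proj2 (Hpb (fob L d)) (sl_obj C A d) (sl_map C A d) (idm _)) as [u [Hu _]].
    { rewrite comp_idr. reflexivity. }
    exists u. exact Hu. }
  set (eta := fun d => (exist _ (proj1_sig (etaE d)) (proj1 (proj2_sig (etaE d)))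
       : slice_hom C A d (fob Fs (fob L d)))).
  set (eps := fun x => (exist _ (gs x) (proj1 (Hpb x)) : slice_hom C B (fob L (fob Fs x)) x)).
  refine (ho_equiv Fs L HF (WP_L C HC f Hf) eps _ _ eta _ _ _).
  - intros x y h. apply sig_eq_pi. simpl. apply Hnat.
  - intro x. apply Wgs.
  - intros x y h. apply sig_eq_pi.
    change (comp (proj1_sig (etaE y)) (proj1_sig h) =
      comp (proj1_sig (fmor Fs (fmor L h))) (proj1_sig (etaE x))).
    destruct (proj2_sig (etaE y)) as [Ey1 Ey2].
    destruct (proj2_sig (etaE x)) as [Ex1 Ex2].
    pose proof (proj2_sig (fmor Fs (fmor L h))) as Eh.
    change (comp (sl_map C A (fob Fs (fob L y))) (proj1_sig (fmor Fs (fmor L h))) = sl_map C A (fob Fs (fob L x))) in Eh.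
    apply (pb_uniq _ _ _ _ (Hpb (fob L y))).
    + rewrite !comp_assoc. rewrite Ey1. rewrite Eh, Ex1. exact (proj2_sig h).
    + rewrite !comp_assoc. rewrite Ey2, comp_idl. rewrite Hnat.
      rewrite <- comp_assoc, Ex2, comp_idr. reflexivity.
  - intro d. change (weq (proj1_sig (etaE d))). pose proof (proj2_sig (etaE d)) as [_ Hu]. apply (weq_cancel C HC _ (gs (fob L d))). apply Wgs. rewrite Hu. apply (fc_weq_id C HC).

  - intro x. apply sig_eq_pi.
    change (comp (proj1_sig (fmor Fs (eps x))) (proj1_sig (etaE (fob Fs x))) =
      idm (sl_obj C A (fob Fs x))).
    destruct (proj2_sig (etaE (fob Fs x))) as [E1 E2].
    pose proof (proj2_sig (fmor Fs (eps x))) as Ee.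
    change (comp (sl_map C A (fob Fs x)) (proj1_sig (fmor Fs (eps x))) =
       sl_map C A (fob Fs (fob L (fob Fs x)))) in Ee.
    apply (pb_uniq _ _ _ _ (Hpb x)).
    + rewrite comp_assoc, Ee, E1, comp_idr. reflexivity.
    + rewrite comp_assoc, Hnat. change (proj1_sig (eps x)) with (gs x).
      rewrite <- comp_assoc, E2, !comp_idr. reflexivity.
Qed.

Lemma exact_part :
  forall (C : FCat), IsFibrationCategory C ->
  forall (A B : Ob C) (f : Hom A B), fib f -> weq f ->
  forall Fs : Functor (slice C B) (slice C A),
    IsPullbackFunctor f Fs -> IsExact Fs.
Proof.
  intros C HC A B f Hf Wf Fs [gs [Hpb Hnat]].
  set (L := LF C HC f Hf).
  assert (SQ : forall (X Y : slice_ob C B) (h : slice_hom C B X Y),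
    IsPullback (proj1_sig h) (gs Y) (proj1_sig (fmor Fs h)) (gs X)).
  { intros X Y h.
    pose proof (proj2_sig (fmor Fs h)) as Eh.
    change (comp (sl_map C A (fob Fs Y)) (proj1_sig (fmor Fs h)) = sl_map C A (fob Fs X)) in Eh.
    split.
    - symmetry. apply Hnat.
    - intros Q a x E.
      destruct (proj2 (Hpb X) Q (comp (sl_map C A (fob Fs Y)) a) x) as [u [[U1 U2] U3]].
      { rewrite <- (proj2_sig h). rewrite <- comp_assoc, E, comp_assoc, (proj1 (Hpb Y)).
        apply eq_sym, comp_assoc. }
      exists u. split; [split|].
      + apply (pb_uniq _ _ _ _ (Hpb Y)).
        * rewrite comp_assoc, Eh. exact U1.
        * rewrite comp_assoc, Hnat, <- comp_assoc, U2. exact E.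
      + exact U2.
      + intros v V1 V2. apply U3; [|exact V2].
        rewrite <- V1, comp_assoc, Eh. reflexivity. }
  split; [|split; [|split]].
  - intros X Y h Hh. exact (fc_pb_fib C HC _ _ _ _ _ _ _ _ Hh (SQ X Y h)).
  - intros X Y h Hh Wh. split.
    + exact (fc_pb_fib C HC _ _ _ _ _ _ _ _ Hh (SQ X Y h)).
    + exact (fc_pb_afib C HC _ _ _ _ _ _ _ _ Hh Wh (SQ X Y h)).
  - intros X A' B' P p f' p' g _ [E U]. split.
    + rewrite <- !fmor_comp, E. reflexivity.
    + intros Q a x Ex.
      assert (Ex0 : comp (proj1_sig (fmor Fs p)) (proj1_sig x) =
                    comp (proj1_sig (fmor Fs f')) (proj1_sig a)).
      { exact (f_equal (@proj1_sig _ _) Ex). }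
      assert (Ha : comp (sl_map C B A') (comp (gs A') (proj1_sig a)) = comp f (sl_map C A Q)).
      { rewrite comp_assoc, (proj1 (Hpb A')), <- comp_assoc.
        pose proof (proj2_sig a) as Ha0.
        change (comp (sl_map C A (fob Fs A')) (proj1_sig a) = sl_map C A Q) in Ha0.
        rewrite Ha0. reflexivity. }
      assert (Hx : comp (sl_map C B X) (comp (gs X) (proj1_sig x)) = comp f (sl_map C A Q)).
      { rewrite comp_assoc, (proj1 (Hpb X)), <- comp_assoc.
        pose proof (proj2_sig x) as Hx0.
        change (comp (sl_map C A (fob Fs X)) (proj1_sig x) = sl_map C A Q) in Hx0.
        rewrite Hx0. reflexivity. }
      set (a' := exist _ _ Ha : slice_hom C B (fob L Q) A').
      set (x' := exist _ _ Hx : slice_hom C B (fob L Q) X).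
      destruct (U (fob L Q) a' x') as [w [[W1 W2] W3]].
      { apply sig_eq_pi.
        change (comp (proj1_sig p) (comp (gs X) (proj1_sig x)) =
                comp (proj1_sig f') (comp (gs A') (proj1_sig a))).
        rewrite comp_assoc, <- Hnat, <- comp_assoc, Ex0, comp_assoc, Hnat, <- comp_assoc.
        reflexivity. }
      apply (f_equal (@proj1_sig _ _)) in W1. apply (f_equal (@proj1_sig _ _)) in W2.
      change (comp (proj1_sig p') (proj1_sig w) = comp (gs A') (proj1_sig a)) in W1.
      change (comp (proj1_sig g) (proj1_sig w) = comp (gs X) (proj1_sig x)) in W2.
      destruct (proj2 (Hpb P) (sl_obj C A Q) (sl_map C A Q) (proj1_sig w) (proj2_sig w))
        as [u0 [[U1 U2] U3]].
      exists (exist _ u0 U1 : slice_hom C A Q (fob Fs P)). split; [split|].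
      * apply sig_eq_pi.
        change (comp (proj1_sig (fmor Fs p')) u0 = proj1_sig a).
        pose proof (proj2_sig (fmor Fs p')) as Ep.
        change (comp (sl_map C A (fob Fs A')) (proj1_sig (fmor Fs p')) = sl_map C A (fob Fs P)) in Ep.
        pose proof (proj2_sig a) as Ha0.
        change (comp (sl_map C A (fob Fs A')) (proj1_sig a) = sl_map C A Q) in Ha0.
        apply (pb_uniq _ _ _ _ (Hpb A')).
        -- rewrite comp_assoc, Ep, U1, Ha0. reflexivity.
        -- rewrite comp_assoc, Hnat, <- comp_assoc, U2. exact W1.
      * apply sig_eq_pi.
        change (comp (proj1_sig (fmor Fs g)) u0 = proj1_sig x).
        pose proof (proj2_sig (fmor Fs g)) as Ep.
        change (comp (sl_map C A (fob Fs X)) (proj1_sig (fmor Fs g)) = sl_map C A (fob Fs P)) in Ep.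
        pose proof (proj2_sig x) as Hx0.
        change (comp (sl_map C A (fob Fs X)) (proj1_sig x) = sl_map C A Q) in Hx0.
        apply (pb_uniq _ _ _ _ (Hpb X)).
        -- rewrite comp_assoc, Ep, U1, Hx0. reflexivity.
        -- rewrite comp_assoc, Hnat, <- comp_assoc, U2. exact W2.
      * intros v V1 V2. apply sig_eq_pi.
        change (proj1_sig v = u0).
        apply (f_equal (@proj1_sig _ _)) in V1. apply (f_equal (@proj1_sig _ _)) in V2.
        change (comp (proj1_sig (fmor Fs p')) (proj1_sig v) = proj1_sig a) in V1.
        change (comp (proj1_sig (fmor Fs g)) (proj1_sig v) = proj1_sig x) in V2.
        pose proof (proj2_sig v) as Hv.
        change (comp (sl_map C A (fob Fs P)) (proj1_sig v) = sl_map C A Q) in Hv.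
        apply U3; [exact Hv|].
        assert (Ev : comp (sl_map C B P) (comp (gs P) (proj1_sig v)) = comp f (sl_map C A Q)).
        { rewrite comp_assoc, (proj1 (Hpb P)), <- comp_assoc, Hv. reflexivity. }
        pose proof (W3 (exist _ _ Ev : slice_hom C B (fob L Q) P)) as HW.
        assert (HW' : (exist _ _ Ev : slice_hom C B (fob L Q) P) = w).
        { apply HW.
          - apply sig_eq_pi.
            change (comp (proj1_sig p') (comp (gs P) (proj1_sig v)) = comp (gs A') (proj1_sig a)).
            rewrite comp_assoc, <- Hnat, <- comp_assoc, V1. reflexivity.
          - apply sig_eq_pi.
            change (comp (proj1_sig g) (comp (gs P) (proj1_sig v)) = comp (gs X) (proj1_sig x)).
            rewrite comp_assoc, <- Hnat, <- comp_assoc, V2. reflexivity. }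
        rewrite <- HW'. reflexivity.
  - intros t Ht X.
    destruct (Ht (fob L X)) as [k Hk].
    destruct (proj2 (Hpb t) (sl_obj C A X) (sl_map C A X) (proj1_sig k) (proj2_sig k))
      as [u0 [[U1 U2] U3]].
    exists (exist _ u0 U1 : slice_hom C A X (fob Fs t)).
    intro v. apply sig_eq_pi. simpl. apply U3; [exact (proj2_sig v)|].
    assert (Ev : comp (sl_map C B t) (comp (gs t) (proj1_sig v)) = comp f (sl_map C A X)).
    { rewrite comp_assoc, (proj1 (Hpb t)), <- comp_assoc.
      pose proof (proj2_sig v) as Hv.
      change (comp (sl_map C A (fob Fs t)) (proj1_sig v) = sl_map C A X) in Hv. rewrite Hv. reflexivity. }
    pose proof (Hk (exist _ (comp (gs t) (proj1_sig v)) Ev : slice_hom C B (fob L X) t)) as Hv.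
    apply (f_equal (@proj1_sig _ _)) in Hv. exact Hv.
Qed.

Theorem proposition2p7 :
  forall (C : FCat), IsFibrationCategory C ->
  forall (A B : Ob C) (f : Hom A B), fib f -> weq f ->
  forall Fs : Functor (slice C B) (slice C A),
    IsPullbackFunctor f Fs -> IsWeakEquivalenceFC Fs.
Proof.
  intros C HC A B f Hf Wf Fs HP. split.
  - exact (exact_part C HC A B f Hf Wf Fs HP).
  - exact (ho_part C HC A B f Hf Wf Fs HP).
Qed.
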